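(* Let $A$ be a finite nonempty set, $m\in\mathbb N_+$, and let $\rho\subseteq A^m$ be a generalized quasiorder. Then for every $n\in\mathbb N_+$ and every $n$-dimensional $m\times\cdots\times m$-array $(a_{i_1,\dots,i_n})_{i_1,\dots,i_n\in\{1,\dots,m\}}$ of elements of $A$ we have: if $\rho\models(a_{i_1,\dots,i_n})$, then $(a_{1,\dots,1},a_{2,\dots,2},\dots,a_{m,\dots,m})\in\rho$.
   Context: An $m$-ary relation $\rho\subseteq A^m$ is reflexive if $(a,\dots,a)\in\rho$ for all $a\in A$. For an $m\times m$-matrix $(a_{ij})$ over $A$, write $\rho\models(a_{ij})$ if every row and every column of the matrix belongs to $\rho$; $\rho$ is (generalized) transitive if $\rho\models(a_{ij})$ implies $(a_{11},\dots,a_{mm})\in\rho$ for every $m\times m$-matrix $(a_{ij})$. A generalized quasiorder is a reflexive and transitive relation. For an $n$-dimensional array $(a_{i_1,\dots,i_n})$ with indices in $\{1,\dots,m\}$, $\rho\models(a_{i_1,\dots,i_n})$ means: for every $j\in\{1,\dots,n\}$ and every fixed choice of the indices $i_1,\dots,i_{j-1},i_{j+1},\dots,i_n$, the $m$-tuple $(a_{i_1,\dots,i_{j-1},1,i_{j+1},\dots,i_n},\dots,a_{i_1,\dots,i_{j-1},m,i_{j+1},\dots,i_n})$ belongs to $\rho$. *)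

(* Defs.v *)
From mathcomp Require Import all_boot.
Set Implicit Arguments. Unset Strict Implicit. Unset Printing Implicit Defensive.

Definition reflexive_rel (A : finType) (m : nat) (rho : {set m.-tuple A}) : Prop :=
  forall a : A, [tuple a | _ < m] \in rho.

Definition models_mx (A : finType) (m : nat) (rho : {set m.-tuple A})
  (M : 'I_m -> 'I_m -> A) : Prop :=
  (forall i : 'I_m, [tuple M i j | j < m] \in rho) /\
  (forall j : 'I_m, [tuple M i j | i < m] \in rho).

Definition transitive_rel (A : finType) (m : nat) (rho : {set m.-tuple A}) : Prop :=
  forall M : 'I_m -> 'I_m -> A, models_mx rho M -> [tuple M i i | i < m] \in rho.

Definition gen_quasiorder (A : finType) (m : nat) (rho : {set m.-tuple A}) : Prop :=
  reflexive_rel rho /\ transitive_rel rho.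

Definition upd_idx (n m : nat) (idx : {ffun 'I_n -> 'I_m}) (j : 'I_n) (k : 'I_m)
  : {ffun 'I_n -> 'I_m} := [ffun l => if l == j then k else idx l].

(* The value
   idx j is irrelevant, so idx ranges over all choices of the other indices. *)
Definition models_arr (A : finType) (m n : nat) (rho : {set m.-tuple A})
  (a : {ffun 'I_n -> 'I_m} -> A) : Prop :=
  forall (j : 'I_n) (idx : {ffun 'I_n -> 'I_m}),
    [tuple a (upd_idx idx j k) | k < m] \in rho.

Definition diag_idx (n m : nat) (i : 'I_m) : {ffun 'I_n -> 'I_m} := [ffun _ => i].

(* Main.v *)
Require Import Defs.
From mathcomp Require Import all_boot.

Definition dd (n m : nat) (s : seq 'I_n) (idx : {ffun 'I_n -> 'I_m}) (i : 'I_m)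
  : {ffun 'I_n -> 'I_m} := [ffun l => if l \in s then i else idx l].
Arguments dd {n m} s idx i.

Lemma dd_ind (A : finType) (m n : nat) (rho : {set m.-tuple A})
  (a : {ffun 'I_n -> 'I_m} -> A) :
  transitive_rel rho -> models_arr rho a ->
  forall s x idx, [tuple a (dd (x :: s) idx i) | i < m] \in rho.
Proof.
move=> Ht Ha; elim=> [|y s IH] x idx.
  have -> : [tuple a (dd [:: x] idx i) | i < m] = [tuple a (upd_idx idx x i) | i < m].
    apply: eq_mktuple => i; congr a; apply/ffunP => l; by rewrite !ffunE inE.
  exact: Ha.
case: (boolP (x \in y :: s)) => Hx.
  have -> : [tuple a (dd [:: x, y & s] idx i) | i < m] = [tuple a (dd (y :: s) idx i) | i < m].
    apply: eq_mktuple => i; congr a; apply/ffunP => l; rewrite !ffunE.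
    rewrite [l \in x :: _]inE; case: eqP => // ->; by rewrite Hx.
  exact: IH.
pose M := fun i k : 'I_m => a [ffun l => if l == x then k else if l \in y :: s then i else idx l].
have HM : models_mx rho M.
  split.
  - move=> i.
    have -> : [tuple M i j | j < m] = [tuple a (upd_idx (dd (y :: s) idx i) x j) | j < m].
      apply: eq_mktuple => j; rewrite /M; congr a; apply/ffunP => l; by rewrite !ffunE.
    exact: Ha.
  - move=> k.
    have -> : [tuple M i k | i < m] = [tuple a (dd (y :: s) (upd_idx idx x k) i) | i < m].
      apply: eq_mktuple => i; rewrite /M; congr a; apply/ffunP => l; rewrite !ffunE.
      case: eqP => [->|]; first by rewrite (negbTE Hx).
      by case: (l \in y :: s).
    exact: IH.
have := Ht M HM.
have -> // : [tuple M i i | i < m] = [tuple a (dd [:: x, y & s] idx i) | i < m].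
apply: eq_mktuple => i; rewrite /M; congr a; apply/ffunP => l; rewrite !ffunE.
rewrite [l \in x :: _]inE; by case: eqP.
Qed.

Theorem lemma3p6 (A : finType) (m : nat) (rho : {set m.-tuple A}) :
  0 < #|A| -> 0 < m -> gen_quasiorder rho ->
  forall (n : nat) (a : {ffun 'I_n -> 'I_m} -> A),
    0 < n -> models_arr rho a ->
    [tuple a (diag_idx n i) | i < m] \in rho.
Proof.
move=> _ Hm [_ Ht] n a Hn Ha.
pose idx0 : {ffun 'I_n -> 'I_m} := [ffun _ => Ordinal Hm].
have x : 'I_n := Ordinal Hn.
have -> : [tuple a (diag_idx n i) | i < m] = [tuple a (dd (x :: enum 'I_n) idx0 i) | i < m].
  apply: eq_mktuple => i; congr a; apply/ffunP => l; by rewrite !ffunE inE mem_enum orbT.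
exact: (@dd_ind _ _ _ _ _ Ht Ha (enum (ordinal n)) x idx0).
Qed.
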